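(* Let $a<b$ be real numbers and $(R_n)_{n\ge0}$ a sequence of real polynomials such that: (a) $R_0$ is a constant and $R_1$ has degree $1$; (b) there exist $\alpha,\beta\in\mathbb{R}$, $\alpha\ne0$, with $R_n=(\alpha X+\beta)R_{n-1}-R_{n-2}$ for all $n\ge2$; (c) either (i) $R_n(a)R_{n+1}(a)>0$ and $R_n(b)R_{n+1}(b)<0$ for all $n\ge0$, or (ii) $R_n(a)R_{n+1}(a)<0$ and $R_n(b)R_{n+1}(b)>0$ for all $n\ge0$. Then: (1) $\deg R_n=n$; (2) all roots of $R_n$ are real, simple and lie in $(a,b)$: $a<x^{(n)}_1<\cdots<x^{(n)}_n<b$; (3) the roots of $R_{n+1}$ interlace those of $R_n$: $a<x^{(n+1)}_1<x^{(n)}_1<x^{(n+1)}_2<\cdots<x^{(n)}_n<x^{(n+1)}_{n+1}<b$. *)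

(* Defs.v *)
From HB Require Import structures.
From mathcomp Require Import all_boot all_order all_algebra.
From mathcomp Require Import reals.
Set Implicit Arguments. Unset Strict Implicit. Unset Printing Implicit Defensive.
Import Order.TTheory GRing.Theory Num.Theory.
Local Open Scope ring_scope.

(* Hence all roots of p
   (in any extension field) are real, simple, and are exactly the entries
   of s. *)
Definition real_simple_roots_in (R : realType) (a b : R) (p : {poly R})
    (s : seq R) : Prop :=
  [/\ sorted <%R s,
      all (fun x => (a < x) && (x < b)) s &
      p = lead_coef p *: \prod_(x <- s) ('X - x%:P)].

Definition interlace (R : realType) (s t : seq R) : Prop :=
  forall i, (i < size s)%N -> nth 0 t i < nth 0 s i /\ nth 0 s i < nth 0 t i.+1.

(* Main.v *)
Require Import Defs.
From HB Require Import structures.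
From mathcomp Require Import all_boot all_order all_algebra.
From mathcomp Require Import reals.
From mathcomp Require Import polyrcf.
From mathcomp Require Import lra zify ring.
From Stdlib Require Import IndefiniteDescription.
Import Order.TTheory GRing.Theory Num.Theory.
Local Open Scope ring_scope.

Section H.
Variable R : realType.

Lemma split_lemma {Q : {poly R}} {s : seq R} :
  Q != 0 -> (size Q <= (size s).+1)%N -> all (root Q) s -> uniq s ->
  Q = lead_coef Q *: \prod_(x <- s) ('X - x%:P) /\ size Q = (size s).+1.
Proof.
move=> Q0 sQ rs us.
have ur : poly.uniq_roots s by rewrite poly.uniq_rootsE.
have [q Qe] := uniq_roots_prod_XsubC rs ur.
set pr := \prod_(x <- s) ('X - x%:P) in Qe.
have pr0 : pr != 0 by rewrite monic_neq0 // monic_prod_XsubC.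
have q0 : q != 0 by apply: contraNneq Q0 => q0; rewrite Qe q0 mul0r.
have spr : size pr = (size s).+1 by rewrite size_prod_XsubC.
have sq : size Q = (size q + size s)%N.
  by rewrite Qe size_mul // spr addnS.
have sq1 : size q = 1%N.
  have : (size q > 0)%N by rewrite size_poly_gt0.
  move: sQ; rewrite sq; lia.
have [c c0 qc] := size_poly1P q (introT eqP sq1).
split; last by rewrite sq sq1.
rewrite Qe qc mul_polyC lead_coefZ.
by rewrite (monicP (monic_prod_XsubC _ _ _)) mulr1.
Qed.

Lemma horner_rsr (c : R) (z : seq R) u :
  (c *: \prod_(x <- z) ('X - x%:P)).[u] = c * \prod_(k < size z) (u - nth 0 z k).
Proof.
rewrite hornerZ horner_prod (big_nth 0) big_mkord; congr (_ * _).
by apply: eq_bigr => i _; rewrite hornerXsubC.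
Qed.

Lemma pair_prod (c : R) (z : seq R) u v :
  (c *: \prod_(x <- z) ('X - x%:P)).[u] * (c *: \prod_(x <- z) ('X - x%:P)).[v] =
  c ^+ 2 * \prod_(k < size z) ((u - nth 0 z k) * (v - nth 0 z k)).
Proof.
rewrite !horner_rsr big_split /=. rewrite expr2; ring.
Qed.

Lemma sgn_pos (c : R) (z : seq R) u v : c != 0 ->
  (forall k, (k < size z)%N -> 0 < (u - nth 0 z k) * (v - nth 0 z k)) ->
  0 < (c *: \prod_(x <- z) ('X - x%:P)).[u] * (c *: \prod_(x <- z) ('X - x%:P)).[v].
Proof.
move=> c0 H; rewrite pair_prod mulr_gt0 //; first by rewrite exprn_even_gt0.
by apply: prodr_gt0 => k _; apply: H.
Qed.

Lemma sgn_neg (c : R) (z : seq R) u v i : c != 0 -> (i < size z)%N ->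
  (u - nth 0 z i) * (v - nth 0 z i) < 0 ->
  (forall k, (k < size z)%N -> k != i -> 0 < (u - nth 0 z k) * (v - nth 0 z k)) ->
  (c *: \prod_(x <- z) ('X - x%:P)).[u] * (c *: \prod_(x <- z) ('X - x%:P)).[v] < 0.
Proof.
move=> c0 iz Hi H; rewrite pair_prod (bigD1 (Ordinal iz)) //=.
rewrite pmulr_rlt0 ?exprn_even_gt0 // nmulr_rlt0 //.
apply: prodr_gt0 => k kn; apply: H => //.
Qed.

Lemma nth_le (s : seq R) i j : sorted <%R s -> (i <= j)%N -> (j < size s)%N ->
  nth 0 s i <= nth 0 s j.
Proof.
move=> ss ij js; rewrite lt_sorted_uniq_le in ss; case/andP: ss => _ ss.
by apply: (sorted_leq_nth le_trans lexx) => //; rewrite inE //=; exact: leq_ltn_trans ij js.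
Qed.

Lemma nth_lt (s : seq R) i j : sorted <%R s -> (i < j)%N -> (j < size s)%N ->
  nth 0 s i < nth 0 s j.
Proof.
move=> ss ij js.
by apply: (sorted_ltn_nth lt_trans) => //; rewrite inE //=; exact: ltn_trans ij js.
Qed.


Lemma sign3 (A B C : R) : 0 < A * B -> 0 < A * C -> 0 < B * C.
Proof.
move=> h1 h2.
have A0 : A != 0 by apply: contraTneq h1 => ->; rewrite mul0r ltxx.
have e : (B * C) * (A * A) = (A * B) * (A * C) by ring.
have : 0 < (B * C) * (A * A) by rewrite e mulr_gt0.
by rewrite pmulr_lgt0 // -expr2 exprn_even_gt0.
Qed.

Lemma rsr_uniq (a b : R) p s t : p != 0 ->
  real_simple_roots_in a b p s -> real_simple_roots_in a b p t -> s = t.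
Proof.
move=> p0 [ss _ ps] [st _ pt]; apply: lt_sorted_eq => // x.
have lc0 : lead_coef p != 0 by rewrite lead_coef_eq0.
have e1 : (x \in s) = root p x by rewrite -(root_prod_XsubC s) -(rootZ _ _ lc0) -ps.
have e2 : (x \in t) = root p x by rewrite -(root_prod_XsubC t) -(rootZ _ _ lc0) -pt.
by rewrite e1 e2.
Qed.

Lemma step (a b alpha beta : R) (Pm Py Q : {poly R}) (m : nat) (y z : seq R) :
  a < b -> size y = m.+1 -> size z = m ->
  real_simple_roots_in a b Py y -> real_simple_roots_in a b Pm z ->
  interlace z y -> Pm != 0 ->
  Q = (alpha *: 'X + beta%:P) * Py - Pm ->
  size Py = m.+2 -> size Pm = m.+1 ->
  0 < Pm.[a] * Q.[a] -> 0 < Pm.[b] * Q.[b] ->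
  exists x, [/\ size x = m.+2, real_simple_roots_in a b Q x,
     interlace y x & size Q = m.+3].
Proof.
move=> ab sy sz [ys yab Pye] [zs zab Pme] Hint Pm0 Qe sPy sPm sa sb.
set W := a :: rcons y b.
pose w i := nth 0 W i.
have sW : size W = m.+3 by rewrite /= size_rcons sy.
have w0 : w 0%N = a by [].
have wl : w m.+2 = b by rewrite /w /W /= nth_rcons sy ltnn eqxx.
have wy j : (j < m.+1)%N -> w j.+1 = nth 0 y j by move=> hj; rewrite /w /W /= nth_rcons sy hj.
have Wsort : sorted <%R W.
  rewrite /W /= rcons_path (path_sortedE lt_trans) ys andbT.
  apply/andP; split.
  - by apply/allP => u uy; have /andP[] := allP yab u uy.
  - have [->|yn] := eqVneq y [::]; first by [].
    have : last a y \in y by case: (y) yn => // u l _; rewrite /= mem_last.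
    by move=> /(allP yab) /andP[].
have wlt i : (i < m.+2)%N -> w i < w i.+1.
  by move=> hi; apply: nth_lt => //; rewrite sW.
have wle i j : (i <= j)%N -> (j < m.+3)%N -> w i <= w j.
  by move=> ij hj; apply: nth_le => //; rewrite sW.
have ylt i j : (i < j)%N -> (j < m.+1)%N -> nth 0 y i < nth 0 y j.
  by move=> ij hj; apply: nth_lt => //; rewrite sy.
have yle i j : (i <= j)%N -> (j < m.+1)%N -> nth 0 y i <= nth 0 y j.
  by move=> ij hj; apply: nth_le => //; rewrite sy.
have yin j : (j < m.+1)%N -> a < nth 0 y j < b.
  by move=> hj; apply: (allP yab); rewrite mem_nth // sy.
have Qy j : (j < m.+1)%N -> Q.[nth 0 y j] = - Pm.[nth 0 y j].
  move=> hj; have r : root Py (nth 0 y j).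
    by rewrite Pye rootZ ?lead_coef_eq0 ?root_prod_XsubC ?mem_nth ?sy // -size_poly_eq0 sPy.
  by rewrite Qe hornerD hornerN hornerM (rootP r) mulr0 add0r.
have Hi k : (k < m)%N -> nth 0 y k < nth 0 z k /\ nth 0 z k < nth 0 y k.+1.
  by move=> hk; apply: Hint; rewrite sz.
have lm0 : lead_coef Pm != 0 by rewrite lead_coef_eq0.
have sgn i : (i < m.+2)%N -> Q.[w i] * Q.[w i.+1] < 0.
  move=> hi; case: i hi => [|j] hj.
    rewrite w0 wy // Qy // mulrN oppr_lt0.
    have h : 0 < Pm.[a] * Pm.[nth 0 y 0].
      rewrite Pme; apply: sgn_pos => // k hk; rewrite sz in hk.
      have [h1 _] := Hi k hk.
      have h2 : nth 0 y 0 <= nth 0 y k by apply: yle => //; rewrite ltnS ltnW.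
      have /andP[h3 _] := yin 0%N isT.
      nra.
    by apply: sign3 sa h.
  have [jm|jm] := ltnP j m.
    have hj1 : (j < m.+1)%N := ltnW jm.
    rewrite (wy j hj1) (wy j.+1 jm) (Qy j hj1) (Qy j.+1 jm) mulrNN.
    rewrite Pme; apply: (@sgn_neg _ _ _ _ j lm0); rewrite ?sz //.
      have [h1 h2] := Hi j jm.
      nra.
    move=> k hk kj; have [h1 h2] := Hi k hk.
    have [kl|kg] := ltnP k j.
      have : nth 0 y k.+1 <= nth 0 y j by apply: yle => //; apply: ltnW; rewrite ltnS ltnW.
      have := ylt j j.+1 (ltnSn _) jm.
      nra.
    have kg' : (j < k)%N by rewrite ltn_neqAle eq_sym kj kg.
    have : nth 0 y j.+1 <= nth 0 y k by apply: yle => //; exact: ltnW.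
    have := ylt j j.+1 (ltnSn _) jm.
    nra.
  have jm' : j = m by apply/eqP; rewrite eqn_leq jm andbT; exact: hj.
  subst j; rewrite wl wy // Qy // mulNr oppr_lt0.
  have h : 0 < Pm.[b] * Pm.[nth 0 y m].
    rewrite Pme; apply: sgn_pos => // k hk; rewrite sz in hk.
    have [_ h1] := Hi k hk.
    have h2 : nth 0 y k.+1 <= nth 0 y m by apply: yle.
    have /andP[_ h3] := yin m (ltnSn _).
    nra.
  exact: sign3 h sb.
have rt i : {x | (i < m.+2)%N -> w i < x < w i.+1 /\ root Q x}.
  case: (ltnP i m.+2) => hi; last by exists 0.
  have [x xin rx] := poly_ivtoo (ltW (wlt i hi)) (sgn i hi).
  by exists x => _; split => //; move: xin; rewrite in_itv.
pose r i := sval (rt i).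
have rP i : (i < m.+2)%N -> w i < r i < w i.+1 /\ root Q (r i) := svalP (rt i).
pose x := mkseq r m.+2.
have sx : size x = m.+2 := size_mkseq _ _.
have nx i : (i < m.+2)%N -> nth 0 x i = r i := @nth_mkseq _ 0 r m.+2 i.
have xs : sorted <%R x.
  apply/(sortedP 0) => i; rewrite sx => hi.
  rewrite (nx i (ltnW hi)) (nx i.+1 hi).
  have [/andP[_ h1] _] := rP i (ltnW hi); have [/andP[h2 _] _] := rP i.+1 hi.
  exact: lt_trans h1 h2.
have Q0 : Q != 0 by apply: contraTneq sa => ->; rewrite horner0 mulr0 ltxx.
have sQ : (size Q <= m.+3)%N.
  have s1 : (size (alpha *: 'X + beta%:P)%R <= 2)%N.
    apply: leq_trans (size_polyD _ _) _; rewrite geq_max.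
    rewrite (leq_trans (size_scale_leq _ _)) ?size_polyX //.
    exact: leq_trans (size_polyC_leq1 _) _.
  have s2 : (size ((alpha *: 'X + beta%:P) * Py)%R <= m.+3)%N.
    apply: leq_trans (size_polyMleq _ _) _; rewrite sPy addnS /=.
    by apply: leq_trans (leq_add s1 (leqnn m.+1)) _; rewrite add2n.
  rewrite Qe; apply: leq_trans (size_polyD _ _) _; rewrite size_polyN sPm geq_max s2 /=.
  exact: (leq_trans (leqnSn _) (leqnSn _)).
have rx : all (root Q) x.
  apply/allP => u /(nthP 0) [i]; rewrite sx => hi <-; rewrite nx //; exact: (rP i hi).2.
have sQ' : (size Q <= (size x).+1)%N by rewrite sx.
have [Qf sQe] := split_lemma Q0 sQ' rx (lt_sorted_uniq xs).
exists x; split; first exact: sx.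
- split; [exact: xs| |exact: Qf]; apply/allP => u /(nthP 0) [i]; rewrite sx => hi <-; rewrite nx //.
  have [/andP[h1 h2] _] := rP i hi.
  have := wle 0%N i (leq0n _) (ltnW hi).
  have := wle i.+1 m.+2 hi (ltnSn _).
  rewrite w0 wl => h3 h4; apply/andP; split; [exact: le_lt_trans h4 h1 | exact: lt_le_trans h2 h3].
- move=> i; rewrite sy => hi; rewrite (nx i (ltnW hi)) (nx i.+1 hi).
  have [/andP[_ h1] _] := rP i (ltnW hi); have [/andP[h2 _] _] := rP i.+1 hi.
  by rewrite -(wy i hi).
- by rewrite sQe sx.
Qed.

End H.
Arguments sign3 {R} A {B C}.
Arguments rsr_uniq {R a b p s t}.
Arguments split_lemma {R Q s}.

Lemma sign3n (R : realType) (A B C : R) : A * B < 0 -> A * C < 0 -> 0 < B * C.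
Proof. by move=> h1 h2; apply: (sign3 (- A)); rewrite mulNr oppr_gt0. Qed.
Arguments sign3n {R} A {B C}.

Lemma sign3m (R : realType) (A B C : R) : 0 < A * B -> A * C < 0 -> B * C < 0.
Proof.
move=> h1 h2; rewrite -oppr_gt0 -mulrN; apply: (sign3 A) => //.
by rewrite mulrN oppr_gt0.
Qed.
Arguments sign3m {R A B C}.

Theorem proposition5 (R : realType) (a b alpha beta : R) (P : nat -> {poly R}) :
  a < b ->
  (size (P 0%N) <= 1)%N ->
  (size (P 1%N) = 2)%N ->
  alpha != 0 ->
  (forall n, (2 <= n)%N ->
     P n = (alpha *: 'X + beta%:P) * P n.-1 - P n.-2) ->
  ((forall n, 0 < (P n).[a] * (P n.+1).[a] /\ (P n).[b] * (P n.+1).[b] < 0) \/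
   (forall n, (P n).[a] * (P n.+1).[a] < 0 /\ 0 < (P n).[b] * (P n.+1).[b])) ->
  exists xs : nat -> seq R,
    forall n,
      [/\ (size (P n) = n.+1)%N,
          size (xs n) = n,
          real_simple_roots_in a b (P n) (xs n) &
          interlace (xs n) (xs n.+1)].
Proof.
move=> ab sP0 sP1 al0 Hrec Hc.
have Hne n : (P n).[a] != 0.
  by case: Hc => H; have [h _] := H n; apply: contraTneq h => ->; rewrite mul0r ltxx.
have Hs n : 0 < (P n).[a] * (P n.+2).[a] /\ 0 < (P n).[b] * (P n.+2).[b].
  case: Hc => H; have [h1 h2] := H n; have [h3 h4] := H n.+1.
    split; first by apply: (sign3 (P n.+1).[a]); rewrite // mulrC.
    by apply: (sign3n (P n.+1).[b]); rewrite // mulrC.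
  split; first by apply: (sign3n (P n.+1).[a]); rewrite // mulrC.
  by apply: (sign3 (P n.+1).[b]); rewrite // mulrC.
have P0e := size1_polyC sP0.
set c := (P 0%N)`_0 in P0e.
have c0 : c != 0 by have := Hne 0%N; rewrite P0e hornerC.
have H01 : (P 1%N).[a] * (P 1%N).[b] < 0.
  case: Hc => H; have [h1 h2] := H 0%N; rewrite P0e !hornerC in h1 h2.
    exact: (sign3m h1 h2).
  by rewrite mulrC; apply: (sign3m h2 h1).
have I n : exists s t, [/\ size s = n, size t = n.+1, size (P n) = n.+1,
    size (P n.+1) = n.+2 & [/\ real_simple_roots_in a b (P n) s,
      real_simple_roots_in a b (P n.+1) t & interlace s t]].
  elim: n => [|n [s [t [ss st sPn sPn1 [rs rt it]]]]].
    have [r rin rr] := poly_ivtoo (ltW ab) H01.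
    have P10 : P 1%N != 0 by rewrite -size_poly_eq0 sP1.
    have sP1' : (size (P 1%N) <= (size [:: r]).+1)%N by rewrite sP1.
    have ar : all (root (P 1%N)) [:: r] by rewrite /= rr.
    have [P1e _] := split_lemma P10 sP1' ar isT.
    have r0 : real_simple_roots_in a b (P 0%N) [::].
      by split => //; rewrite big_nil P0e lead_coefC -mul_polyC mulr1.
    have r1 : real_simple_roots_in a b (P 1%N) [:: r].
      split; [by []| |exact: P1e].
      by move: rin; rewrite /= in_itv /= andbT.
    exists [::], [:: r]; split; [by []|by []|by rewrite P0e size_polyC c0|exact: sP1|split].
    - exact: r0.
    - exact: r1.
    - by move=> i.
  have Pn0 : P n != 0 by rewrite -size_poly_eq0 sPn.
  have [x [sx rx ix sQ]] := @step R a b alpha beta (P n) (P n.+1) (P n.+2) n t s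
    ab st ss rt rs it Pn0 (Hrec n.+2 isT) sPn1 sPn (Hs n).1 (Hs n).2.
  by exists t, x; split.
have E n : exists s, size s = n /\ real_simple_roots_in a b (P n) s.
  by have [s [t [? _ _ _ [? _ _]]]] := I n; exists s.
pose xs n := proj1_sig (constructive_indefinite_description _ (E n)).
exists xs => n.
have [xsz xr] := proj2_sig (constructive_indefinite_description _ (E n)).
have [xsz1 xr1] := proj2_sig (constructive_indefinite_description _ (E n.+1)).
have [s [t [ss st sPn sPn1 [rs rt it]]]] := I n.
have Pn0 : P n != 0 by rewrite -size_poly_eq0 sPn.
have Pn10 : P n.+1 != 0 by rewrite -size_poly_eq0 sPn1.
have e1 : xs n = s := rsr_uniq Pn0 xr rs.
have e2 : xs n.+1 = t := rsr_uniq Pn10 xr1 rt.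
by split => //; rewrite ?e1 ?e2.
Qed.
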